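(* Let $h,k\ge 2$, $w=a^hb^k$, and for $n\ge1$ let $S_n = a^h(a^{2h}b^{2k})(aba^{h-1}b^{k-1})^{n}(a^{2h}b^{2k})b^k$. For all integers $i,j\ge1$, $S_i \vdash^*_{\{w\}} S_j$ if and only if $i=j$.
   Context: For words $u,v$, the shuffle $u \sqcup\!\sqcup v$ is the set of all words $u_1v_1\cdots u_kv_k$ with $k\ge 1$, $u=u_1\cdots u_k$, $v=v_1\cdots v_k$ (pieces possibly empty). For a finite set $I$ of words, $v \vdash_I w$ means $w \in v \sqcup\!\sqcup u$ for some $u\in I$, and $\vdash_I^*$ is its reflexive-transitive closure. *)

(* Defs.v *)
From HB Require Import structures.
From Stdlib Require Import Relations.
From mathcomp Require Import all_boot.
Set Implicit Arguments. Unset Strict Implicit. Unset Printing Implicit Defensive.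

Inductive letter := la | lb.
Definition letter_eqb (x y : letter) : bool :=
  match x, y with la, la | lb, lb => true | _, _ => false end.
Lemma letter_eqP : Equality.axiom letter_eqb.
Proof. by case; case; constructor. Qed.
HB.instance Definition _ := hasDecEq.Build letter letter_eqP.

Definition word := seq letter.

Definition shuffle (u v x : word) : Prop :=
  exists (us vs : seq word),
    [/\ 1 <= size us, size us = size vs, flatten us = u, flatten vs = v &
        x = flatten [seq p.1 ++ p.2 | p <- zip us vs]].

(* v |-_I w : w in v ⧢ u for some u in I (I a finite set of words, given as a list) *)
Definition step (I : seq word) (v w : word) : Prop :=
  exists2 u, u \in I & shuffle v u w.

Definition derives (I : seq word) : relation word := clos_refl_trans word (step I).

Definition pw (c : letter) (n : nat) : word := nseq n c.

Definition wrd (h k : nat) : word := pw la h ++ pw lb k.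

Definition Sn (h k n : nat) : word :=
  pw la h ++ (pw la (2 * h) ++ pw lb (2 * k)) ++
  flatten (nseq n ([:: la; lb] ++ pw la h.-1 ++ pw lb k.-1)) ++
  (pw la (2 * h) ++ pw lb (2 * k)) ++ pw lb k.

(* Main.v *)
Require Import Defs.
From mathcomp Require Import all_boot zify.
From Stdlib Require Import ZArith Lia Relations.
Set Implicit Arguments. Unset Strict Implicit.

Inductive shf {T : Type} : seq T -> seq T -> seq T -> Prop :=
| shf_nil : shf [::] [::] [::]
| shf_l x u v t : shf u v t -> shf (x :: u) v (x :: t)
| shf_r x u v t : shf u v t -> shf u (x :: v) (x :: t).

Lemma shf_u0 T (u : seq T) : shf u [::] u.
Proof. elim: u => [|x u IH]; [exact: shf_nil | exact: shf_l]. Qed.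
Lemma shf_0v T (u : seq T) : shf [::] u u.
Proof. elim: u => [|x u IH]; [exact: shf_nil | exact: shf_r]. Qed.

Lemma shf_cat T (u1 v1 t1 u2 v2 t2 : seq T) :
  shf u1 v1 t1 -> shf u2 v2 t2 -> shf (u1 ++ u2) (v1 ++ v2) (t1 ++ t2).
Proof.
move=> H1 H2; elim: H1 => //= [x u v t _ IH|x u v t _ IH]; [exact: shf_l|exact: shf_r].
Qed.

Lemma shuffle_shf (v u z : word) : shuffle v u z -> shf v u z.
Proof.
case=> us [vs [_ Hs <- <- ->]].
elim: us vs Hs => [|a us IH] [|b vs] //=.
  by constructor.
case=> Hs; apply: shf_cat; last exact: IH.
have := shf_cat (shf_u0 a) (shf_0v b). by rewrite cats0.
Qed.

Lemma shf_map T U (f : T -> U) u v t : shf u v t -> shf (map f u) (map f v) (map f t).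
Proof. elim=> /= *; by constructor. Qed.

Lemma shf_filter T (P : pred T) u v t : shf u v t -> shf (filter P u) (filter P v) (filter P t).
Proof. elim=> /= *; try by constructor. all: by case: (P _) => //; constructor. Qed.

Lemma shf_u0_eq T (u t : seq T) : shf u [::] t -> t = u.
Proof.
move Ev: [::] => v H; elim: H Ev => //= x u' v' t' _ IH Ev; by rewrite IH.
Qed.

Lemma shf_lift (v w z : word) : shf v w z -> forall z' : seq (letter * bool),
  map fst z' = v -> exists z'', shf z' (map (fun c => (c, true)) w) z'' /\ map fst z'' = z.
Proof.
elim=> [|x u v' t _ IH|x u v' t _ IH] z'.
- case: z' => // _; exists [::]; split => //; constructor.
- case: z' => // [[c l] z'] /= [-> E]. have [z'' [H1 H2]] := IH _ E.
  exists ((x, l) :: z''); split; [exact: shf_l | by rewrite /= H2].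
- move=> E; have [z'' [H1 H2]] := IH _ E.
  exists ((x, true) :: z''); split; [exact: shf_r | by rewrite /= H2].
Qed.

Lemma shf_take T (u v t : seq T) : shf u v t -> forall n, exists n1 n2,
  shf (take n1 u) (take n2 v) (take n t).
Proof.
elim=> [|x u' v' t' _ IH|x u' v' t' _ IH] n.
- exists 0, 0; rewrite !take0; constructor.
- case: n => [|n]; first by exists 0, 0; rewrite !take0; constructor.
  have [n1 [n2 H]] := IH n; exists n1.+1, n2 => /=; exact: shf_l.
- case: n => [|n]; first by exists 0, 0; rewrite !take0; constructor.
  have [n1 [n2 H]] := IH n; exists n1, n2.+1 => /=; exact: shf_r.
Qed.

Lemma shf_count T (P : pred T) u v t : shf u v t -> count P t = count P u + count P v.
Proof. elim=> //= x u0 v0 t0 _ ->; case: (P x) => /=; lia. Qed.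
Definition ca (s : word) := count_mem la s.
Definition cb (s : word) := count_mem lb s.
Definition ht (h k : nat) (s : word) : Z :=
  (Z.of_nat k * Z.of_nat (ca s) - Z.of_nat h * Z.of_nat (cb s))%Z.

Lemma ht_cat h k u v : ht h k (u ++ v) = (ht h k u + ht h k v)%Z.
Proof. rewrite /ht /ca /cb !count_cat; lia. Qed.

Lemma size_ab s : size s = ca s + cb s.
Proof. elim: s => //= -[] s IH; rewrite /ca /cb /= in IH *; lia. Qed.

Lemma take_nseqm T i j (x : T) : take i (nseq j x) = nseq (minn i j) x.
Proof.
case: (leqP i j) => H.
- rewrite take_nseq //; congr nseq; lia.
- rewrite take_oversize ?size_nseq; [congr nseq; lia | lia].
Qed.

Lemma take_ab p q r : exists t u,
  take r (nseq p la ++ nseq q lb) = nseq t la ++ nseq u lb /\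
  t <= p /\ u <= q /\ (0 < u -> t = p) /\ t + u = minn r (p + q).
Proof.
rewrite take_cat size_nseq; case: ifP => H.
- exists r, 0; rewrite take_nseq ?cats0; last lia. split => //; lia.
- exists p, (minn (r - p) q); rewrite take_nseqm; split => //; lia.
Qed.

Lemma ca_nseq n c : ca (nseq n c) = (c == la) * n.
Proof. by rewrite /ca count_nseq. Qed.
Lemma cb_nseq n c : cb (nseq n c) = (c == lb) * n.
Proof. by rewrite /cb count_nseq. Qed.

Definition goodc h k (c : word) :=
  [/\ (forall n, 0 <= ht h k (take n c))%Z,
      (forall n, 0 < cb (take n c) -> h <= ca (take n c)) &
      ht h k c = 0%Z].

Lemma goodc_step h k c c' : goodc h k c -> shf c (wrd h k) c' -> goodc h k c'.
Proof.
case=> H1 H2 H3 Hs; split.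
- move=> n; have [n1 [n2 Ht]] := shf_take Hs n.
  have [t [u [E [? [? [? ?]]]]]] := take_ab h k n2.
  move: (H1 n1); rewrite /wrd /pw E in Ht.
  rewrite /ht /ca /cb !(shf_count _ Ht) !count_cat !count_nseq /=.
  rewrite /ht /ca /cb. case: (posnP u) => Hu; first by subst; lia.
  have -> : t = h by auto. nia.
- move=> n; have [n1 [n2 Ht]] := shf_take Hs n.
  have [t [u [E [? [? [Htu ?]]]]]] := take_ab h k n2.
  move: (H2 n1); rewrite /wrd /pw E in Ht.
  rewrite /ca /cb !(shf_count _ Ht) !count_cat !count_nseq /=.
  rewrite /ca /cb. case: (posnP u) => Hu; first by subst; lia.
  have := Htu Hu; lia.
- move: H3; rewrite /ht /ca /cb !(shf_count _ Hs) /wrd /pw !count_cat !count_nseq /=.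
  rewrite /ht /ca /cb; lia.
Qed.

Definition xof (t : seq (letter * bool)) : word := [seq p.1 | p <- t & ~~ p.2].
Definition cof (t : seq (letter * bool)) : word := [seq p.1 | p <- t & p.2].

Definition Inv h k (x z : word) := exists z' : seq (letter * bool),
  [/\ map fst z' = z, xof z' = x & goodc h k (cof z')].

Lemma Inv_step h k x z z2 : Inv h k x z -> step [:: wrd h k] z z2 -> Inv h k x z2.
Proof.
case=> z' [E1 E2 E3] [u]; rewrite inE => /eqP -> /shuffle_shf Hs.
have [z'' [H1 H2]] := shf_lift Hs E1.
exists z''; split => //.
- have := shf_map fst (shf_filter (fun p => ~~ p.2) H1).
  have -> : [seq p <- [seq (c, true) | c <- wrd h k] | ~~ p.2] = [::] by elim: (wrd h k).
  move/shf_u0_eq; rewrite /xof => ->; exact: E2.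
- apply: (goodc_step E3).
  have := shf_map fst (shf_filter snd H1).
  have -> // : [seq p.1 | p <- [seq (c, true) | c <- wrd h k] & p.2] = wrd h k.
  by elim: (wrd h k) => //= c s ->.
Qed.

Lemma Inv_derives h k x z1 z : derives [:: wrd h k] z1 z -> Inv h k x z1 -> Inv h k x z.
Proof.
rewrite /derives => H; elim: H => // [a b Hs Ha|a b c _ IH1 _ IH2 Ha].
- exact: Inv_step Ha Hs.
- exact: IH2 (IH1 Ha).
Qed.

Definition Bk h k : word := [:: la; lb] ++ pw la h.-1 ++ pw lb k.-1.
Definition Mw h k n : word := flatten (nseq n (Bk h k)).

Lemma ca_cat u v : ca (u ++ v) = ca u + ca v.
Proof. by rewrite /ca count_cat. Qed.
Lemma cb_cat u v : cb (u ++ v) = cb u + cb v.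
Proof. by rewrite /cb count_cat. Qed.

Lemma ht_nseq h k n c : ht h k (nseq n c) =
  if c == la then (Z.of_nat n * Z.of_nat k)%Z else (- Z.of_nat n * Z.of_nat h)%Z.
Proof. rewrite /ht ca_nseq cb_nseq; case: c => /=; lia. Qed.

Lemma ht_nseqa h k n : ht h k (nseq n la) = (Z.of_nat n * Z.of_nat k)%Z.
Proof. by rewrite ht_nseq. Qed.
Lemma ht_nseqb h k n : ht h k (nseq n lb) = (- Z.of_nat n * Z.of_nat h)%Z.
Proof. by rewrite ht_nseq. Qed.

Lemma ZM m n : Z.of_nat (m * n) = (Z.of_nat m * Z.of_nat n)%Z.
Proof. by rewrite -Nat2Z.inj_mul. Qed.

Lemma Sn_eq h k n : Sn h k n =
  nseq (3 * h) la ++ nseq (2 * k) lb ++ Mw h k n ++ nseq (2 * h) la ++ nseq (3 * k) lb.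
Proof.
rewrite /Sn /pw /Mw.
have -> : 3 * h = h + 2 * h by lia.
have -> : 3 * k = 2 * k + k by lia.
by rewrite !nseqD !catA.
Qed.

Lemma htB h k : 1 <= h -> 1 <= k -> ht h k (Bk h k) = 0%Z.
Proof.
move=> Hh Hk; rewrite /Bk /pw !ht_cat !ht_nseq /=; rewrite /ht /ca /cb /=; nia.
Qed.

Lemma htB_take h k r : 2 <= h -> 2 <= k ->
  (- Z.of_nat h < ht h k (take r (Bk h k)) <= Z.of_nat h * Z.of_nat k - Z.of_nat h)%Z.
Proof.
move=> Hh Hk; case: r => [|[|r]] /=.
- rewrite /ht /ca /cb /=; nia.
- rewrite /ht /ca /cb /=; nia.
- have [t [u [E [? [? [Htu ?]]]]]] := take_ab h.-1 k.-1 r.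
  rewrite /pw E.
  have -> : ht h k [:: la, lb & nseq t la ++ nseq u lb] =
     (Z.of_nat k - Z.of_nat h + Z.of_nat t * Z.of_nat k - Z.of_nat u * Z.of_nat h)%Z.
    rewrite /ht /ca /cb /= !count_cat !count_nseq /=; lia.
  case: (posnP u) => Hu; first by subst; nia.
  have := Htu Hu => Ht; nia.
Qed.

Lemma htM_take h k n r : 2 <= h -> 2 <= k ->
  (- Z.of_nat h < ht h k (take r (Mw h k n)) <= Z.of_nat h * Z.of_nat k - Z.of_nat h)%Z.
Proof.
move=> Hh Hk; elim: n r => [|n IH] r.
- rewrite /Mw /= /ht /ca /cb /=; nia.
- have -> : Mw h k n.+1 = Bk h k ++ Mw h k n by [].
  rewrite take_cat; case: ifP => _; first exact: htB_take.
  rewrite ht_cat htB; [exact: IH | lia | lia].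
Qed.

Lemma htM h k n : 1 <= h -> 1 <= k -> ht h k (Mw h k n) = 0%Z.
Proof.
move=> Hh Hk; elim: n => [|n IH]; first by rewrite /Mw /ht /ca /cb /=; lia.
have -> : Mw h k n.+1 = Bk h k ++ Mw h k n by [].
by rewrite ht_cat htB // IH.
Qed.

Lemma size_Mw h k n : 1 <= h -> 1 <= k -> size (Mw h k n) = n * (h + k).
Proof.
move=> Hh Hk; rewrite /Mw size_flatten /shape map_nseq sumn_nseq /Bk /pw /= size_cat !size_nseq.
have -> : (h.-1 + k.-1).+2 = h + k by lia. by rewrite mulnC.
Qed.

Lemma size_Sn h k n : size (Sn h k n) = 3*h+2*k+size (Mw h k n)+2*h+3*k.
Proof. rewrite Sn_eq !size_cat !size_nseq; lia. Qed.

Lemma region h k n p : 2 <= h -> 2 <= k ->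
  let m := size (Mw h k n) in let S := take p (Sn h k n) in
  (p <= 3*h /\ ca S = p /\ cb S = 0) \/
  (      3*h <= p <= 3*h + 2*k /\ ca S = 3*h /\ cb S = p - 3*h) \/
  (      3*h + 2*k <= p <= 3*h+2*k+m /\ (Z.of_nat h * Z.of_nat k - Z.of_nat h < ht h k S <= 2 * (Z.of_nat h * Z.of_nat k) - Z.of_nat h)%Z) \/
  (      3*h+2*k+m <= p <= 3*h+2*k+m+2*h /\ ht h k S = (Z.of_nat h * Z.of_nat k + Z.of_nat (p - (3*h+2*k+m)) * Z.of_nat k)%Z) \/
  (      3*h+2*k+m+2*h <= p /\ ht h k S = (3 * (Z.of_nat h * Z.of_nat k) - Z.of_nat (minn (p - (3*h+2*k+m+2*h)) (3*k)) * Z.of_nat h)%Z).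
Proof.
move=> Hh Hk m S; rewrite /S Sn_eq.
rewrite take_cat size_nseq; case: ltnP => H1.
  left; rewrite take_nseq ?ca_nseq ?cb_nseq /=; lia.
rewrite take_cat size_nseq; case: ltnP => H2.
  right; left; rewrite take_nseq ?ca_cat ?cb_cat ?ca_nseq ?cb_nseq /=; lia.
rewrite take_cat -/m; case: ltnP => H3.
  right; right; left; split; first lia.
  have := @htM_take h k n (p - 3 * h - 2 * k) Hh Hk.
  rewrite !ht_cat !ht_nseqa ht_nseqb !ZM; lia.
rewrite take_cat size_nseq; case: ltnP => H4.
  right; right; right; left; split; first lia.
  rewrite take_nseq; last lia.
  rewrite !ht_cat !ht_nseqa ht_nseqb htM; [|lia|lia].
  have -> : p - 3 * h - 2 * k - m = p - (3 * h + 2 * k + m) by lia.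
  rewrite !ZM; lia.
right; right; right; right; split; first lia.
rewrite take_nseqm !ht_cat !ht_nseqa !ht_nseqb htM; [|lia|lia].
have -> : p - 3 * h - 2 * k - m - 2 * h = p - (3 * h + 2 * k + m + 2 * h) by lia.
rewrite !ZM; lia.
Qed.

Lemma peak h k n p : 2 <= h -> 2 <= k -> p <= size (Sn h k n) ->
  (3 * (Z.of_nat h * Z.of_nat k) <= ht h k (take p (Sn h k n)))%Z ->
  p = 3 * h \/ p = 3*h+2*k+size (Mw h k n)+2*h.
Proof.
move=> Hh Hk Hp; rewrite size_Sn in Hp.
have := region n p Hh Hk; set m := size _; set S := take _ _.
case=> [[H1 [E1 E2]]|[[H1 [E1 E2]]|[[H1 H2]|[[H1 H2]|[H1 H2]]]]].
- rewrite /ht E1 E2 => H; left; nia.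
- rewrite /ht E1 E2 => H; left. rewrite ZM in H.
  have : (Z.of_nat h * Z.of_nat (p - 3 * h) <= 0)%Z by lia. nia.
- move=> H; nia.
- rewrite H2 => H; right.
  have : (Z.of_nat (2 * h) * Z.of_nat k <= Z.of_nat (p - (3 * h + 2 * k + m)) * Z.of_nat k)%Z.
    rewrite ZM; lia.
  move=> H3; have : (Z.of_nat (2 * h) <= Z.of_nat (p - (3 * h + 2 * k + m)))%Z by nia.
  lia.
- rewrite H2 => H; right.
  have : (Z.of_nat (minn (p - (3 * h + 2 * k + m + 2 * h)) (3 * k)) = 0)%Z by nia.
  lia.
Qed.

Lemma low h k n p : 2 <= h -> 2 <= k -> 3 * h <= p <= 3*h+2*k+size (Mw h k n)+2*h ->
  (Z.of_nat h * Z.of_nat k - Z.of_nat h < ht h k (take p (Sn h k n)))%Z.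
Proof.
move=> Hh Hk Hp.
have := region n p Hh Hk; set m := size _ in Hp *; set S := take _ _.
case=> [[H1 [E1 E2]]|[[H1 [E1 E2]]|[[H1 H2]|[[H1 H2]|[H1 H2]]]]].
- rewrite /ht E1 E2; have -> : p = 3 * h by lia. rewrite ZM; nia.
- rewrite /ht E1 E2 !ZM. have : (Z.of_nat (p - 3 * h) <= 2 * Z.of_nat k)%Z by lia. nia.
- lia.
- rewrite H2; nia.
- rewrite H2; have -> : p - (3 * h + 2 * k + m + 2 * h) = 0 by lia. nia.
Qed.

Lemma val3h h k n : 2 <= h -> 2 <= k -> ht h k (take (3 * h) (Sn h k n)) = (3 * (Z.of_nat h * Z.of_nat k))%Z.
Proof.
move=> Hh Hk.
have := region n (3 * h) Hh Hk; set m := size _; set S := take _ _.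
case=> [[H1 [E1 E2]]|[[H1 [E1 E2]]|[[H1 H2]|[[H1 H2]|[H1 H2]]]]].
- rewrite /ht E1 E2 ZM; lia.
- rewrite /ht E1 E2 ZM; lia.
- lia. - lia. - lia.
Qed.

Lemma valN0 h k n : 2 <= h -> 2 <= k ->
  ht h k (take (3*h+2*k+size (Mw h k n)+2*h) (Sn h k n)) = (3 * (Z.of_nat h * Z.of_nat k))%Z.
Proof.
move=> Hh Hk.
have := region n (3*h+2*k+size (Mw h k n)+2*h) Hh Hk; set m := size _; set S := take _ _.
case=> [[H1 [E1 E2]]|[[H1 [E1 E2]]|[[H1 H2]|[[H1 H2]|[H1 H2]]]]].
- lia. - lia. - lia.
- rewrite H2; have -> : 3 * h + 2 * k + m + 2 * h - (3 * h + 2 * k + m) = 2 * h by lia.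
  rewrite ZM; lia.
- rewrite H2; have -> : 3 * h + 2 * k + m + 2 * h - (3 * h + 2 * k + m + 2 * h) = 0 by lia.
  lia.
Qed.

Lemma bb h k n p : 2 <= h -> 2 <= k -> 3 * h <= p < 3 * h + 2 * k -> ca (take p (Sn h k n)) = 3 * h.
Proof.
move=> Hh Hk Hp.
have := region n p Hh Hk; set m := size _; set S := take _ _.
case=> [[H1 [E1 E2]]|[[H1 [E1 E2]]|[[H1 H2]|[[H1 H2]|[H1 H2]]]]]; lia.
Qed.

Lemma high h k n p : 2 <= h -> 2 <= k -> 3*h+2*k <= p < 3*h+2*k+size (Mw h k n)+2*h ->
  (ht h k (take p (Sn h k n)) <= 2 * (Z.of_nat h * Z.of_nat k) - Z.of_nat h)%Z \/
  ht h k (take p.+1 (Sn h k n)) = (ht h k (take p (Sn h k n)) + Z.of_nat k)%Z.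
Proof.
move=> Hh Hk Hp.
have := region n p Hh Hk; set m := size _ in Hp *; set S := take _ _.
case=> [[H1 [E1 E2]]|[[H1 [E1 E2]]|[[H1 H2]|[[H1 H2]|[H1 H2]]]]].
- lia.
- left; rewrite /ht E1 E2 !ZM; have -> : p = 3 * h + 2 * k by lia.
  have -> : 3 * h + 2 * k - 3 * h = 2 * k by lia. rewrite ZM; nia.
- left; lia.
2: lia.
right; rewrite H2.
have := region n p.+1 Hh Hk; rewrite -/m.
case=> [[H3 [E3 E4]]|[[H3 [E3 E4]]|[[H3 H4]|[[H3 H4]|[H3 H4]]]]]; try lia.
- rewrite H4; have -> : p.+1 - (3 * h + 2 * k + m) = (p - (3 * h + 2 * k + m)).+1 by lia.
  rewrite Nat2Z.inj_succ; lia.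
- rewrite H4; have -> : p.+1 - (3 * h + 2 * k + m + 2 * h) = 0 by lia.
  have -> : p - (3 * h + 2 * k + m) = 2 * h - 1 by lia.
  rewrite Nat2Z.inj_sub; last lia. rewrite ZM; lia.
Qed.

Lemma xof_cat u v : xof (u ++ v) = xof u ++ xof v.
Proof. by rewrite /xof filter_cat map_cat. Qed.
Lemma cof_cat u v : cof (u ++ v) = cof u ++ cof v.
Proof. by rewrite /cof filter_cat map_cat. Qed.

Lemma xc_size t : size (xof t) + size (cof t) = size t.
Proof. elim: t => //= -[c []] t IH; rewrite /xof /cof /= in IH *; lia. Qed.

Lemma xc_ca t : ca (map fst t) = ca (xof t) + ca (cof t).
Proof. elim: t => //= -[c []] t IH; rewrite /xof /cof /ca /= in IH *; lia. Qed.
Lemma xc_cb t : cb (map fst t) = cb (xof t) + cb (cof t).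
Proof. elim: t => //= -[c []] t IH; rewrite /xof /cof /cb /= in IH *; lia. Qed.
Lemma xc_ht h k t : ht h k (map fst t) = (ht h k (xof t) + ht h k (cof t))%Z.
Proof. rewrite /ht xc_ca xc_cb; lia. Qed.

Lemma xof_take t n : xof (take n t) = take (size (xof (take n t))) (xof t).
Proof. by rewrite -{3}(cat_take_drop n t) xof_cat take_size_cat. Qed.
Lemma cof_take t n : cof (take n t) = take (size (cof (take n t))) (cof t).
Proof. by rewrite -{3}(cat_take_drop n t) cof_cat take_size_cat. Qed.
Lemma xof_drop t n : xof (drop n t) = drop (size (xof (take n t))) (xof t).
Proof. by rewrite -{3}(cat_take_drop n t) xof_cat drop_size_cat. Qed.

Lemma xof_mono t n1 n2 : n1 <= n2 -> size (xof (take n1 t)) <= size (xof (take n2 t)).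
Proof.
move=> H; rewrite -(take_takel t H) (xof_take (take n2 t) n1) size_take; case: ifP => //; lia.
Qed.
Lemma cof_mono t n1 n2 : n1 <= n2 -> size (cof (take n1 t)) <= size (cof (take n2 t)).
Proof.
move=> H; rewrite -(take_takel t H) (cof_take (take n2 t) n1) size_take; case: ifP => //; lia.
Qed.

Lemma cont t L : L <= size (xof t) -> exists n, n <= size t /\ size (xof (take n t)) = L.
Proof.
elim: t L => [|[c l] t IH] L /=.
- by rewrite /xof /= leqn0 => /eqP ->; exists 0.
- case: l; rewrite /xof /=.
  + move=> HL; have [n [H1 H2]] := IH L HL; exists n.+1; split => //.
  + case: L => [|L] HL; first by exists 0.
    have [n [H1 H2]] := IH L HL; exists n.+1; split => //=. by rewrite H2.
Qed.

Lemma ca_take_mono (s : word) a b : a <= b -> ca (take a s) <= ca (take b s).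
Proof.
move=> H; rewrite -(take_takel s H); set u := take b s.
by rewrite -{2}(cat_take_drop a u) ca_cat leq_addr.
Qed.

Lemma find_cb0 t : cb (cof (take (find (pred1 (lb, true)) t) t)) = 0.
Proof.
elim: t => //= -[c l] t IH; case: ifP => //= Hq.
move: IH; rewrite /cof /cb /=; case: l Hq => //=; case: c => //.
Qed.

Lemma cb_has t : 0 < cb (cof t) -> has (pred1 (lb, true)) t.
Proof. elim: t => //= -[[] []] t IH //=; rewrite /cof /cb /= in IH *; auto. Qed.

Lemma cof_nil t : cof t = [::] -> map fst t = xof t.
Proof.
elim: t => //= -[c l] t IH; rewrite /cof /xof /= in IH *.
case: l => //= H; by rewrite IH.
Qed.

Lemma main h k i j : 2 <= h -> 2 <= k -> Inv h k (Sn h k i) (Sn h k j) -> i = j.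
Proof.
move=> Hh Hk [z' [E1 E2 [G1 G2 G3]]].
have szx := size_Sn h k i; have szy := size_Sn h k j.
set x := Sn h k i in E2 szx *; set y := Sn h k j in E1 szy *.
set mi := size (Mw h k i) in szx; set mj := size (Mw h k j) in szy.
have Hsz : size z' = size y by rewrite -E1 size_map.
have Hy : forall n, ht h k (take n y) = (ht h k (xof (take n z')) + ht h k (cof (take n z')))%Z.
  by move=> n; rewrite -E1 -map_take xc_ht.
have Hc : forall n, (0 <= ht h k (cof (take n z')))%Z by move=> n; rewrite cof_take; apply: G1.
have Hx : forall n, xof (take n z') = take (size (xof (take n z'))) x.
  by move=> n; rewrite -E2 -xof_take.
have Hxs : size (xof z') = size x by rewrite E2.
have [n1 [Hn1 Ln1]] := @cont z' (3 * h) ltac:(lia).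
have Ht1 : (3 * (Z.of_nat h * Z.of_nat k) <= ht h k (take n1 y))%Z.
  rewrite Hy Hx Ln1 val3h //; have := Hc n1; lia.
have E1n : n1 = 3 * h.
  case: (@peak h k j n1 Hh Hk ltac:(rewrite -/y; lia) Ht1) => // HN.
  have := xc_size (drop n1 z'); rewrite xof_drop Ln1 size_drop Hxs size_drop; lia.
subst n1.
have Hc3 : size (cof (take (3 * h) z')) = 0.
  have := xc_size (take (3 * h) z'); rewrite Ln1 size_takel; lia.
set N0i := 3*h+2*k+mi+2*h; set N0j := 3*h+2*k+mj+2*h.
have [n2 [Hn2 Ln2]] := @cont z' N0i ltac:(lia).
have Ht2 : (3 * (Z.of_nat h * Z.of_nat k) <= ht h k (take n2 y))%Z.
  rewrite Hy Hx Ln2 valN0 //; have := Hc n2; lia.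
have E2n : n2 = N0j.
  case: (@peak h k j n2 Hh Hk ltac:(rewrite -/y; lia) Ht2) => // HN.
  subst n2; rewrite Ln1 in Ln2; lia.
subst n2.
have HcN : size (cof (drop N0j z')) = 0.
  have := xc_size (drop N0j z'); rewrite xof_drop Ln2 size_drop Hxs size_drop; lia.
suff Hcn : cof z' = [::].
  have := cof_nil Hcn; rewrite E1 E2 => Exy.
  have : mi = mj by rewrite Exy in szy; lia.
  rewrite /mi /mj !size_Mw; try lia.
  move/eqP; rewrite eqn_mul2r; case/orP; [lia | by move/eqP].
case Ec: (cof z') => [//|c cs]; exfalso.
have Hcb : 0 < cb (cof z').
  rewrite lt0n; apply/negP => /eqP H0; move: G3; rewrite /ht H0 => G3.
  have : ca (cof z') = 0 by nia.
  have := size_ab (cof z'); rewrite H0 Ec /=; lia.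
have Hhas := cb_has Hcb.
set p := find (pred1 (lb, true)) z'.
have Hp : p < size z' by rewrite -has_find.
have Hnth : nth (la, false) z' p = (lb, true) by apply/eqP; exact: (nth_find _ Hhas).
have Htp1 : take p.+1 z' = take p z' ++ [:: (lb, true)].
  by rewrite (take_nth (la, false) Hp) Hnth cats1.
have Hcb0 : cb (cof (take p z')) = 0 by exact: find_cb0.
have Hca : h <= ca (cof (take p z')).
  have := G2 (size (cof (take p.+1 z'))); rewrite -cof_take Htp1 cof_cat ca_cat cb_cat.
  rewrite /cof /ca /cb /=; rewrite /cof /ca /cb in Hcb0 *; lia.
have Hhtc : (Z.of_nat h * Z.of_nat k <= ht h k (cof (take p z')))%Z.
  rewrite /ht Hcb0; nia.
have Hp3 : 3 * h <= p.
  case: (leqP (3 * h) p) => // Hlt.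
  have := cof_mono z' (ltnW Hlt); have := size_ab (cof (take p z')); lia.
have HpN : p < N0j.
  case: (ltnP p N0j) => // Hge.
  have H1 := cof_mono z' Hge.
  have H2 : size (cof (take p.+1 z')) <= size (cof z').
    by rewrite -{2}(cat_take_drop p.+1 z') cof_cat size_cat leq_addr.
  have H3 : size (cof z') = size (cof (take N0j z')).
    by rewrite -{1}(cat_take_drop N0j z') cof_cat size_cat HcN addn0.
  move: H2; rewrite Htp1 cof_cat size_cat /=; lia.
set Lp := size (xof (take p z')).
have HL1 : 3 * h <= Lp by rewrite -Ln1; exact: xof_mono.
have HL2 : Lp <= N0i by rewrite -Ln2; apply: xof_mono; lia.
case: (ltnP p (3 * h + 2 * k)) => Hp2.
- have := @bb h k j p Hh Hk ltac:(lia); rewrite -/y -E1 -map_take xc_ca.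
  rewrite Hx -/Lp.
  have := @ca_take_mono x _ _ HL1; rewrite /x bb //; try lia.
- case: (high Hh Hk (ltac:(lia) : 3*h+2*k <= p < 3*h+2*k+mj+2*h)) => [H|H].
  + move: H; rewrite -/y Hy Hx -/Lp.
    have := @low h k i Lp Hh Hk ltac:(lia); rewrite -/x; lia.
  + move: H; rewrite -/y -E1 -!map_take Htp1 map_cat ht_cat /ht /ca /cb /=; lia.
Qed.

Unset Implicit Arguments.
Theorem lemma3 (h k : nat) :
  2 <= h -> 2 <= k ->
  forall i j : nat, 1 <= i -> 1 <= j ->
    (derives [:: wrd h k] (Sn h k i) (Sn h k j) <-> i = j).
Proof.
move=> Hh Hk i j _ _; split.
- move=> D; apply: (main Hh Hk); apply: (Inv_derives D).
  exists [seq (c, false) | c <- Sn h k i]; split.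
  + by rewrite -map_comp map_id.
  + by rewrite /xof filter_map /= -map_comp (@eq_filter _ _ predT) // filter_predT map_id.
  + rewrite /cof filter_map /= (@eq_filter _ _ pred0) //.
    have -> : [seq x <- Sn h k i | pred0 x] = [::] by elim: (Sn h k i).
    split; [move=> n; rewrite /ht /ca /cb /=; lia | by move=> n | rewrite /ht /ca /cb /=; lia].
- move=> ->; exact: rt_refl.
Qed.
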